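(* Let $a,b,c>0$ and let $d,e$ be real numbers, not in $\{0,-1,-2,\dots\}$, such that $de\ge 2abc$ and $$d+e\ \ge\ \max\Big\{a+b+c,\ \tfrac12\big(ab+bc+ac+2(a+b+c)-1-2abc\big),\ 2(ab+bc+ac)-3abc\Big\}.$$ Then $f(z)=z\,{}_3F_2(a,b,c;d,e;z)$ is close-to-convex in $\mathbb{D}$ with respect to $-\log(1-z)$.
   Context: $\mathbb{D}=\{z\in\mathbb{C}:|z|<1\}$. For $x\in\mathbb{C}$, $(x)_0=1$ and $(x)_n=x(x+1)\cdots(x+n-1)$ for $n\ge1$. The Clausen hypergeometric function is ${}_3F_2(a,b,c;d,e;z)=\sum_{n=0}^\infty \frac{(a)_n(b)_n(c)_n}{(d)_n(e)_n(1)_n}z^n$ for $|z|<1$ (with $d,e\notin\{0,-1,-2,\dots\}$). A normalized analytic function $f$ on $\mathbb{D}$ ($f(0)=0$, $f'(0)=1$) is close-to-convex with respect to a convex univalent function $g$ on $\mathbb{D}$ if $f$ is univalent on $\mathbb{D}$ and $\operatorname{Re}\big(f'(z)/g'(z)\big)>0$ for all $z\in\mathbb{D}$. Here $g(z)=-\log(1-z)$, which is convex univalent on $\mathbb{D}$, with $g'(z)=1/(1-z)$. *)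

(* Defs.v *)
From Stdlib Require Import Reals Factorial.
From Coquelicot Require Import Coquelicot.
Open Scope R_scope.

Fixpoint poch (x : R) (n : nat) : R :=
  match n with
  | O => 1
  | S m => poch x m * (x + INR m)
  end.

Definition inD (z : C) : Prop := Cmod z < 1.

(* Sum of a complex series, computed componentwise (equals the sum whenever
   the series converges). *)
Definition CSeries (u : nat -> C) : C :=
  (Series (fun n => Re (u n)), Series (fun n => Im (u n))).

Definition F32_term (a b c d e : R) (z : C) (n : nat) : C :=
  Cmult (RtoC (poch a n * poch b n * poch c n
               / (poch d n * poch e n * INR (fact n))))
        (Cpow z n).

Definition F32 (a b c d e : R) (z : C) : C := CSeries (F32_term a b c d e z).

(* g(z) = -log(1 - z), principal branch (Re(1-z) > 0 on the disk). *)
Definition neglog1m (z : C) : C :=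
  let w := Cminus (RtoC 1) z in
  (- ln (Cmod w), - atan (Im w / Re w)).

Definition Cderiv_at (f : C -> C) (z l : C) : Prop :=
  @is_derive C_AbsRing C_NormedModule f z l.

Definition close_to_convex_wrt (f g : C -> C) : Prop :=
  (forall z, inD z -> exists l, Cderiv_at f z l) /\
  f (RtoC 0) = RtoC 0 /\ Cderiv_at f (RtoC 0) (RtoC 1) /\
  (forall z w, inD z -> inD w -> f z = f w -> z = w) /\
  (forall z, inD z -> forall f' g', Cderiv_at f z f' -> Cderiv_at g z g' ->
       0 < Re (Cdiv f' g')).

(* Main.v *)
Require Import Defs.
From Stdlib Require Import Reals Factorial Lra Lia Psatz.
From Coquelicot Require Import Coquelicot.
Open Scope R_scope.

Lemma poch_pos x n : 0 < x -> 0 < poch x n.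
Proof.
  intros Hx; induction n as [|n IH]; simpl; [lra|].
  apply Rmult_lt_0_compat; auto. pose proof (pos_INR n); lra.
Qed.

Definition Aco (a b c d e : R) (n : nat) : R :=
  poch a n * poch b n * poch c n / (poch d n * poch e n * INR (fact n)).

Lemma Aco_pos a b c d e n : 0 < a -> 0 < b -> 0 < c -> 0 < d -> 0 < e ->
  0 < Aco a b c d e n.
Proof.
  intros; unfold Aco.
  pose proof (poch_pos a n); pose proof (poch_pos b n); pose proof (poch_pos c n);
  pose proof (poch_pos d n); pose proof (poch_pos e n).
  pose proof (INR_fact_lt_0 n).
  apply Rdiv_lt_0_compat; repeat apply Rmult_lt_0_compat; auto.
Qed.

Lemma Aco_S a b c d e n : 0 < d -> 0 < e ->
  Aco a b c d e (S n) = Aco a b c d e n *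
    ((a + INR n) * (b + INR n) * (c + INR n) / ((d + INR n) * (e + INR n) * (INR n + 1))).
Proof.
  intros Hd He; unfold Aco; simpl poch.
  rewrite fact_simpl, mult_INR, S_INR.
  pose proof (poch_pos d n Hd); pose proof (poch_pos e n He).
  pose proof (INR_fact_lt_0 n). pose proof (pos_INR n).
  field; repeat split; lra.
Qed.

Lemma Aco_0 a b c d e : Aco a b c d e 0 = 1.
Proof. unfold Aco; simpl; field. Qed.

Section Coefs.
Variables a b c d e : R.
Hypotheses (Ha : 0 < a) (Hb : 0 < b) (Hc : 0 < c) (Hd : 0 < d) (He : 0 < e)
  (H1 : d * e >= 2 * a * b * c) (H2 : d + e >= a + b + c)
  (H3 : d + e >= (a * b + b * c + a * c + 2 * (a + b + c) - 1 - 2 * a * b * c) / 2)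
  (H4 : d + e >= 2 * (a * b + b * c + a * c) - 3 * a * b * c).

Definition Bco n := (INR n + 1) * Aco a b c d e n.

Lemma poly_ineq (N : R) : 0 <= N ->
  (N + 2) * ((a + N) * (b + N) * (c + N)) <= (N + 1) ^ 2 * ((d + N) * (e + N)).
Proof.
  intros HN.
  set (p := d + e). set (q := d * e).
  set (s1 := a + b + c). set (s2 := a*b+b*c+a*c). set (s3 := a*b*c).
  assert (E : (N + 1) ^ 2 * ((d + N) * (e + N)) - (N + 2) * ((a + N) * (b + N) * (c + N))
     = (p - s1) * (N*N*N) + (q + 2*p + 1 - s2 - 2*s1) * (N*N)
       + (2*q + p - s3 - 2*s2) * N + (q - 2*s3)) by (unfold p,q,s1,s2,s3; ring).
  assert (0 <= p - s1) by (unfold p, s1; lra).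
  assert (0 <= q + 2*p + 1 - s2 - 2*s1) by (unfold p,q,s1,s2; lra).
  assert (0 <= 2*q + p - s3 - 2*s2) by (unfold p,q,s3,s2; lra).
  assert (0 <= q - 2*s3) by (unfold q,s3; lra).
  assert (0 <= N*N) by nra. assert (0 <= N*N*N) by nra.
  assert (0 <= (p - s1) * (N*N*N)) by nra.
  assert (0 <= (q + 2*p + 1 - s2 - 2*s1) * (N*N)) by nra.
  assert (0 <= (2*q + p - s3 - 2*s2) * N) by nra.
  lra.
Qed.

Lemma Bco_0 : Bco 0 = 1.
Proof. unfold Bco; rewrite Aco_0; simpl; ring. Qed.

Lemma Bco_pos n : 0 < Bco n.
Proof. unfold Bco. pose proof (Aco_pos a b c d e n Ha Hb Hc Hd He). pose proof (pos_INR n). nra. Qed.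

Lemma Bco_decr n : Bco (S n) <= Bco n.
Proof.
  unfold Bco. rewrite Aco_S by auto. rewrite S_INR.
  pose proof (Aco_pos a b c d e n Ha Hb Hc Hd He). set (A := Aco a b c d e n).
  pose proof (pos_INR n). set (N := INR n) in *.
  pose proof (poly_ineq N H0).
  assert (0 < (d + N) * (e + N) * (N + 1)) by (repeat apply Rmult_lt_0_compat; lra).
  replace ((N + 1 + 1) * (A * ((a + N) * (b + N) * (c + N) / ((d + N) * (e + N) * (N + 1)))))
    with (A * ((N + 2) * ((a + N) * (b + N) * (c + N))) / ((d + N) * (e + N) * (N + 1)))
    by (field; lra).
  apply Rmult_le_reg_r with ((d + N) * (e + N) * (N + 1)); auto.
  unfold Rdiv; rewrite Rmult_assoc, Rinv_l, Rmult_1_r by lra.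
  replace ((N + 1) * A * ((d + N) * (e + N) * (N + 1))) with (A * ((N+1)^2 * ((d + N) * (e + N)))) by ring.
  apply Rmult_le_compat_l; [unfold A; lra | exact H5]. Qed.

Lemma Bco_le1 n : Bco n <= 1.
Proof.
  induction n as [|n IH]; [rewrite Bco_0; lra|]. pose proof (Bco_decr n); lra.
Qed.

Lemma Aco_le1 n : Aco a b c d e n <= 1.
Proof.
  pose proof (Bco_le1 n). unfold Bco in H. pose proof (pos_INR n).
  pose proof (Aco_pos a b c d e n Ha Hb Hc Hd He). nra.
Qed.

End Coefs.

Lemma norm_R (x : R) : norm x = Rabs x.
Proof. reflexivity. Qed.

Lemma Cmod_le_sum (z : C) : Cmod z <= Rabs (Re z) + Rabs (Im z).
Proof.
  unfold Cmod, Re, Im. destruct z as [x y]; simpl.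
  rewrite <- (sqrt_pow2 (Rabs x + Rabs y)) by (pose proof (Rabs_pos x); pose proof (Rabs_pos y); lra).
  apply sqrt_le_1_alt.
  replace (x * (x * 1)) with (Rabs x * Rabs x) by (rewrite <- Rabs_mult; rewrite Rabs_pos_eq; nra).
  replace (y * (y * 1)) with (Rabs y * Rabs y) by (rewrite <- Rabs_mult; rewrite Rabs_pos_eq; nra).
  pose proof (Rabs_pos x); pose proof (Rabs_pos y). nra.
Qed.

Lemma Re_le_Cmod (z : C) : Rabs (Re z) <= Cmod z.
Proof. apply re_le_Cmod. Qed.

Lemma Im_le_Cmod (z : C) : Rabs (Im z) <= Cmod z.
Proof. pose proof (Rmax_Cmod z). unfold Im. pose proof (Rmax_r (Rabs (fst z)) (Rabs (snd z))). lra. Qed.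

Lemma exR_scal (c : R) (a : nat -> R) : ex_series a -> ex_series (fun n => c * a n).
Proof. intros H. exact (@ex_series_scal_l R_AbsRing R_NormedModule c a H). Qed.
Lemma exR_plus (a b : nat -> R) : ex_series a -> ex_series b -> ex_series (fun n => a n + b n).
Proof. intros H1 H2. exact (@ex_series_plus R_AbsRing R_NormedModule a b H1 H2). Qed.
Lemma exR_opp (a : nat -> R) : ex_series a -> ex_series (fun n => - a n).
Proof. intros H1. exact (@ex_series_opp R_AbsRing R_NormedModule a H1). Qed.
Lemma exR_minus (a b : nat -> R) : ex_series a -> ex_series b -> ex_series (fun n => a n - b n).
Proof. intros H1 H2. exact (@ex_series_minus R_AbsRing R_NormedModule a b H1 H2). Qed.

Definition Cok (u : nat -> C) := ex_series (fun n => Re (u n)) /\ ex_series (fun n => Im (u n)).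

Lemma Cok_bound (u : nat -> C) (b : nat -> R) :
  (forall n, Cmod (u n) <= b n) -> ex_series b -> Cok u.
Proof.
  intros Hb Hs; split; apply (@ex_series_le R_AbsRing R_CompleteNormedModule _ b); auto; intros n; rewrite norm_R.
  - eapply Rle_trans; [apply Re_le_Cmod|auto].
  - eapply Rle_trans; [apply Im_le_Cmod|auto].
Qed.

Lemma CSeries_bound (u : nat -> C) (b : nat -> R) :
  (forall n, Cmod (u n) <= b n) -> ex_series b -> Cmod (CSeries u) <= 2 * Series b.
Proof.
  intros Hb Hs.
  assert (HR : ex_series (fun n => Rabs (Re (u n)))).
  { apply (@ex_series_le R_AbsRing R_CompleteNormedModule _ b); auto; intros n; rewrite norm_R, Rabs_Rabsolu.
    eapply Rle_trans; [apply Re_le_Cmod|auto]. }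
  assert (HI : ex_series (fun n => Rabs (Im (u n)))).
  { apply (@ex_series_le R_AbsRing R_CompleteNormedModule _ b); auto; intros n; rewrite norm_R, Rabs_Rabsolu.
    eapply Rle_trans; [apply Im_le_Cmod|auto]. }
  eapply Rle_trans; [apply Cmod_le_sum|]. unfold CSeries, Re at 1, Im at 1; simpl.
  pose proof (Series_Rabs _ HR). pose proof (Series_Rabs _ HI).
  assert (Series (fun n => Rabs (Re (u n))) <= Series b).
  { apply Series_le; auto. intros n; split; [apply Rabs_pos|].
    eapply Rle_trans; [apply Re_le_Cmod|auto]. }
  assert (Series (fun n => Rabs (Im (u n))) <= Series b).
  { apply Series_le; auto. intros n; split; [apply Rabs_pos|].
    eapply Rle_trans; [apply Im_le_Cmod|auto]. }
  lra.
Qed.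

Lemma CSeries_plus (u v : nat -> C) : Cok u -> Cok v ->
  CSeries (fun n => Cplus (u n) (v n)) = Cplus (CSeries u) (CSeries v).
Proof.
  intros [Hu1 Hu2] [Hv1 Hv2]; unfold CSeries, Cplus; simpl.
  unfold Re, Im in *. simpl.
  f_equal; apply Series_plus; auto.
Qed.

Lemma CSeries_opp (u : nat -> C) :
  CSeries (fun n => Copp (u n)) = Copp (CSeries u).
Proof.
  unfold CSeries, Copp; simpl. unfold Re, Im; simpl.
  f_equal; apply Series_opp.
Qed.

Lemma CSeries_scal (k : C) (u : nat -> C) : Cok u ->
  CSeries (fun n => Cmult k (u n)) = Cmult k (CSeries u).
Proof.
  intros [H1 H2]; unfold CSeries, Cmult; simpl. unfold Re, Im in *; simpl.
  f_equal.
  - rewrite <- !Series_scal_l, <- Series_minus; auto; apply exR_scal; auto.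
  - rewrite <- !Series_scal_l, <- Series_plus; auto; apply exR_scal; auto.
Qed.

Lemma Cok_scal (k : C) (u : nat -> C) : Cok u -> Cok (fun n => Cmult k (u n)).
Proof.
  intros [H1 H2]; split; unfold Cmult, Re, Im in *; simpl.
  - apply exR_minus; apply exR_scal; auto.
  - apply exR_plus; apply exR_scal; auto.
Qed.

Lemma Cok_plus (u v : nat -> C) : Cok u -> Cok v -> Cok (fun n => Cplus (u n) (v n)).
Proof.
  intros [H1 H2] [H3 H4]; split; unfold Cplus, Re, Im in *; simpl; apply exR_plus; auto.
Qed.

Lemma Cok_opp (u : nat -> C) : Cok u -> Cok (fun n => Copp (u n)).
Proof.
  intros [H1 H2]; split; unfold Copp, Re, Im in *; simpl; apply exR_opp; auto.
Qed.

Lemma CSeries_minus (u v : nat -> C) : Cok u -> Cok v ->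
  CSeries (fun n => Cminus (u n) (v n)) = Cminus (CSeries u) (CSeries v).
Proof.
  intros Hu Hv. unfold Cminus. rewrite CSeries_plus, CSeries_opp; auto.
  apply Cok_opp; auto.
Qed.

Lemma CSeries_shift (u : nat -> C) : Cok u ->
  CSeries u = Cplus (u 0%nat) (CSeries (fun n => u (S n))).
Proof.
  intros [H1 H2]; unfold CSeries, Cplus, Re, Im in *; simpl.
  rewrite (Series_incr_1 _ H1), (Series_incr_1 _ H2). destruct (u 0%nat); reflexivity.
Qed.

Lemma CSeries_ext (u v : nat -> C) : (forall n, u n = v n) -> CSeries u = CSeries v.
Proof.
  intros H; unfold CSeries; f_equal; apply Series_ext; intros; rewrite H; auto.
Qed.

Lemma is_derive_C_small (F : C -> C) (z l : C) :
  (forall eps, 0 < eps -> exists delta, 0 < delta /\ forall w, Cmod (Cminus w z) < delta ->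
      Cmod (Cminus (Cminus (F w) (F z)) (Cmult (Cminus w z) l)) <= eps * Cmod (Cminus w z)) ->
  Cderiv_at F z l.
Proof.
  intros H. split.
  - apply is_linear_scal_l.
  - intros x Hx. pose proof (@is_filter_lim_locally_unique C_AbsRing (AbsRing_NormedModule C_AbsRing) z x Hx) as Hzx. subst x.
    intros eps. apply (@locally_le_locally_norm C_AbsRing (AbsRing_NormedModule C_AbsRing)).
    destruct (H eps (cond_pos eps)) as [d [Hd Hw]].
    exists (mkposreal d Hd). intros w Hb. unfold ball_norm in Hb. simpl in Hb.
    change (Cmod (Cminus (Cminus (F w) (F z)) (Cmult (Cminus w z) l)) <= eps * Cmod (Cminus w z)). apply Hw. exact Hb.
Qed.

Lemma lim_inv_S : is_lim_seq (fun n => / (INR n + 1)) 0.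
Proof.
  assert (H : is_lim_seq (fun n => INR (S n)) p_infty).
  { apply (is_lim_seq_incr_1 INR). apply is_lim_seq_INR. }
  pose proof (is_lim_seq_inv _ _ H) as H2.
  simpl in H2. apply is_lim_seq_ext with (fun n => / INR (S n)).
  - intros n; rewrite S_INR; reflexivity.
  - apply H2. discriminate.
Qed.

Lemma ex_series_poly2 (r : R) : 0 < r < 1 ->
  ex_series (fun n => (INR n + 1) ^ 2 * r ^ n).
Proof.
  intros Hr.
  assert (Hpos : forall n, 0 < (INR n + 1) ^ 2 * r ^ n).
  { intros n; pose proof (pos_INR n); apply Rmult_lt_0_compat; [nra| apply pow_lt; lra]. }
  apply ex_series_ext with (fun n => Rabs ((INR n + 1) ^ 2 * r ^ n)).
  { intros n; apply Rabs_pos_eq. left; auto. }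
  apply (ex_series_DAlembert _ r); [lra | intros n; specialize (Hpos n); lra | ].
  apply is_lim_seq_ext with (fun n => (1 + / (INR n + 1)) ^ 2 * r).
  { intros n. rewrite Rabs_pos_eq by (apply Rlt_le, Rdiv_lt_0_compat; apply Hpos).
    rewrite S_INR. pose proof (pos_INR n). assert (r ^ n <> 0) by (apply pow_nonzero; lra). simpl. field. repeat split; lra. }
  assert (Hl : is_lim_seq (fun n => (1 + / (INR n + 1)) ^ 2 * r) ((1 + 0) ^ 2 * r)).
  { apply is_lim_seq_mult'; [|apply is_lim_seq_const].
    apply (is_lim_seq_ext (fun n => (1 + / (INR n + 1)) * ((1 + / (INR n + 1)) * 1))).
    { intros; simpl; ring. }
    replace ((1 + 0)^2) with ((1+0) * ((1+0) * 1)) by ring.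
    apply is_lim_seq_mult'; [|apply is_lim_seq_mult'; [|apply is_lim_seq_const]];
    apply is_lim_seq_plus'; try apply is_lim_seq_const; apply lim_inv_S. }
  replace ((1 + 0) ^ 2 * r) with r in Hl by ring. exact Hl.
Qed.

Definition PS (al : nat -> R) (w : C) : C :=
  CSeries (fun n => Cmult (RtoC (al n)) (Cpow w n)).

Lemma Cmod_term (x : R) (w : C) n : Cmod (Cmult (RtoC x) (Cpow w n)) = Rabs x * Cmod w ^ n.
Proof. rewrite Cmod_mult, Cmod_R, Cmod_pow; auto. Qed.

Lemma term_bound (al : nat -> R) (M r : R) (w : C) n :
  Rabs (al n) <= M * (INR n + 1) ^ 2 -> Cmod w <= r ->
  Cmod (Cmult (RtoC (al n)) (Cpow w n)) <= M * ((INR n + 1) ^ 2 * r ^ n).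
Proof.
  intros H1 H2. rewrite Cmod_term.
  pose proof (Cmod_ge_0 w). pose proof (Rabs_pos (al n)).
  assert (Cmod w ^ n <= r ^ n) by (apply pow_incr; lra).
  assert (0 <= Cmod w ^ n) by (apply pow_le; lra).
  nra.
Qed.

Lemma PS_Cok (al : nat -> R) (M r : R) (w : C) :
  (forall n, Rabs (al n) <= M * (INR n + 1) ^ 2) -> 0 < r < 1 -> Cmod w <= r ->
  Cok (fun n => Cmult (RtoC (al n)) (Cpow w n)).
Proof.
  intros H1 Hr H2. apply Cok_bound with (fun n => M * ((INR n + 1) ^ 2 * r ^ n)).
  - intros n; apply term_bound; auto.
  - apply exR_scal, ex_series_poly2; auto.
Qed.

Lemma eprime_rec (w z : C) n :
  let h := Cminus w z in
  Cminus (Cminus (Cpow w (S (S n))) (Cpow z (S (S n)))) (Cmult (Cmult (RtoC (INR (S n) + 1)) (Cpow z (S n))) h)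
  = Cplus (Cmult w (Cminus (Cminus (Cpow w (S n)) (Cpow z (S n))) (Cmult (Cmult (RtoC (INR n + 1)) (Cpow z n)) h)))
          (Cmult (Cmult (RtoC (INR n + 1)) (Cpow z n)) (Cmult h h)).
Proof.
  intros h; unfold h. rewrite S_INR. rewrite !RtoC_plus.
  change (Cpow w (S (S n))) with (Cmult w (Cmult w (Cpow w n))).
  change (Cpow z (S (S n))) with (Cmult z (Cmult z (Cpow z n))).
  change (Cpow w (S n)) with (Cmult w (Cpow w n)).
  change (Cpow z (S n)) with (Cmult z (Cpow z n)).
  ring.
Qed.

Lemma eprime_bound (w z : C) (r : R) n : 0 < r -> Cmod w <= r -> Cmod z <= r ->
  Cmod (Cminus (Cminus (Cpow w (S n)) (Cpow z (S n))) (Cmult (Cmult (RtoC (INR n + 1)) (Cpow z n)) (Cminus w z)))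
  <= (INR n + 1) ^ 2 * r ^ n * Cmod (Cminus w z) ^ 2 / r.
Proof.
  intros Hr Hw Hz. set (H := Cmod (Cminus w z)).
  assert (HH : 0 <= H) by apply Cmod_ge_0.
  induction n as [|n IH].
  - replace (INR 0 + 1) with 1 by (simpl; ring). match goal with |- Cmod ?X <= _ => replace X with (RtoC 0) by (simpl; ring) end. rewrite Cmod_0. unfold Rdiv. apply Rmult_le_pos; [|left; apply Rinv_0_lt_compat; auto]. simpl. nra.
  - rewrite eprime_rec. eapply Rle_trans; [apply Cmod_triangle|].
    rewrite !Cmod_mult, Cmod_R, Cmod_pow. fold H.
    pose proof (pos_INR n). rewrite Rabs_pos_eq by lra.
    pose proof (Cmod_ge_0 w). pose proof (Cmod_ge_0 z).
    assert (Hzn : Cmod z ^ n <= r ^ n) by (apply pow_incr; lra).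
    assert (Hrn : 0 <= r ^ n) by (apply pow_le; lra).
    set (E := Cmod (Cminus (Cminus (Cpow w (S n)) (Cpow z (S n))) (Cmult (Cmult (RtoC (INR n + 1)) (Cpow z n)) (Cminus w z)))) in *.
    assert (HE : 0 <= E) by apply Cmod_ge_0.
    rewrite S_INR. simpl pow.
    replace ((INR n + 1 + 1) * ((INR n + 1 + 1) * 1) * (r * r ^ n) * (H * (H * 1)) / r)
      with ((INR n + 1 + 1) * (INR n + 1 + 1) * r ^ n * (H * H)) by (field; lra).
    assert (Cmod w * E <= r * ((INR n + 1) ^ 2 * r ^ n * H ^ 2 / r)) by (apply Rmult_le_compat; auto).
    replace (r * ((INR n + 1) ^ 2 * r ^ n * H ^ 2 / r)) with ((INR n + 1) ^ 2 * r ^ n * H ^ 2) in H3 by (field; lra).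
    assert ((INR n + 1) * Cmod z ^ n * (H * H) <= (INR n + 1) * r ^ n * (H * H)).
    { apply Rmult_le_compat_r; [nra|]. apply Rmult_le_compat_l; lra. }
    assert (0 <= r ^ n * (H * H)) by (apply Rmult_le_pos; nra).
    simpl in H3. nra.
Qed.

Lemma Cok_shift (u : nat -> C) : Cok u -> Cok (fun n => u (S n)).
Proof.
  intros [H1 H2]; split.
  - apply (@ex_series_incr_1 R_AbsRing R_NormedModule (fun n => Re (u n))); auto.
  - apply (@ex_series_incr_1 R_AbsRing R_NormedModule (fun n => Im (u n))); auto.
Qed.

Lemma Cmod_sub_le (w z : C) : Cmod w <= Cmod z + Cmod (Cminus w z).
Proof.
  replace w with (Cplus z (Cminus w z)) at 1 by ring. apply Cmod_triangle.
Qed.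

Lemma PS_deriv (al : nat -> R) (z : C) :
  (forall n, Rabs (al n) <= 1) -> Cmod z < 1 ->
  Cderiv_at (PS al) z (PS (fun n => (INR n + 1) * al (S n)) z).
Proof.
  intros Hal Hz.
  pose proof (Cmod_ge_0 z) as Hz0.
  set (r := (1 + Cmod z) / 2).
  assert (Hr : 0 < r < 1) by (unfold r; lra).
  assert (Hzr : Cmod z <= r) by (unfold r; lra).
  set (M := Series (fun n => (INR n + 1) ^ 2 * r ^ n)).
  set (K := 2 * Rabs M / r + 1).
  assert (HK : 0 < K). { unfold K. pose proof (Rabs_pos M).
    assert (0 <= 2 * Rabs M / r) by (apply Rmult_le_pos; [lra| left; apply Rinv_0_lt_compat; lra]). lra. }
  set (al' := fun n => (INR n + 1) * al (S n)).
  assert (Hb1 : forall n, Rabs (al n) <= 1 * (INR n + 1) ^ 2).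
  { intros n. pose proof (Hal n). pose proof (pos_INR n). nra. }
  assert (Hb2 : forall n, Rabs (al' n) <= 1 * (INR n + 1) ^ 2).
  { intros n. unfold al'. rewrite Rabs_mult. pose proof (Hal (S n)). pose proof (pos_INR n).
    rewrite (Rabs_pos_eq (INR n + 1)) by lra. pose proof (Rabs_pos (al (S n))). nra. }
  apply is_derive_C_small. intros eps Heps.
  exists (Rmin ((1 - Cmod z) / 2) (eps / K)). split.
  { apply Rmin_pos; [lra| apply Rdiv_lt_0_compat; lra]. }
  intros w Hw.
  assert (Hw1 : Cmod (Cminus w z) < (1 - Cmod z) / 2) by (eapply Rlt_le_trans; [apply Hw| apply Rmin_l]).
  assert (Hw2 : Cmod (Cminus w z) < eps / K) by (eapply Rlt_le_trans; [apply Hw| apply Rmin_r]).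
  assert (Hwr : Cmod w <= r) by (pose proof (Cmod_sub_le w z); unfold r; lra).
  set (h := Cminus w z) in *.
  pose proof (PS_Cok al 1 r w Hb1 Hr Hwr) as Cw.
  pose proof (PS_Cok al 1 r z Hb1 Hr Hzr) as Cz.
  pose proof (PS_Cok al' 1 r z Hb2 Hr Hzr) as Cz'.
  set (e' := fun n => Cminus (Cminus (Cpow w (S n)) (Cpow z (S n))) (Cmult (Cmult (RtoC (INR n + 1)) (Cpow z n)) h)).
  assert (Hid : Cminus (Cminus (PS al w) (PS al z)) (Cmult h (PS al' z))
              = CSeries (fun n => Cmult (RtoC (al (S n))) (e' n))).
  { unfold PS. rewrite <- CSeries_minus by auto.
    rewrite <- CSeries_scal by auto.
    assert (Cd : Cok (fun n => Cminus (Cmult (al n) (Cpow w n)) (Cmult (al n) (Cpow z n)))).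
    { unfold Cminus. apply Cok_plus; auto. apply Cok_opp; auto. }
    rewrite (CSeries_shift _ Cd).
    replace (Cminus (Cmult (al 0%nat) (Cpow w 0)) (Cmult (al 0%nat) (Cpow z 0))) with (RtoC 0) by (simpl; ring).
    transitivity (Cminus (CSeries (fun n => Cminus (Cmult (al (S n)) (Cpow w (S n))) (Cmult (al (S n)) (Cpow z (S n))))) (CSeries (fun n => Cmult h (Cmult (al' n) (Cpow z n))))).
    { ring. }
    rewrite <- (CSeries_minus _ _ (Cok_shift _ Cd)) by (apply Cok_scal; auto).
    apply CSeries_ext. intros n. unfold e', al'. rewrite RtoC_mult. ring. }
  rewrite Hid.
  set (H := Cmod h). assert (HH : 0 <= H) by apply Cmod_ge_0.
  eapply Rle_trans.
  { apply (CSeries_bound _ (fun n => (H ^ 2 / r) * ((INR n + 1) ^ 2 * r ^ n))).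
    - intros n. rewrite Cmod_mult, Cmod_R.
      pose proof (eprime_bound w z r n (proj1 Hr) Hwr Hzr). fold h in H0. fold H in H0.
      change (Cmod (e' n)) with (Cmod (Cminus (Cminus (Cpow w (S n)) (Cpow z (S n))) (Cmult (Cmult (RtoC (INR n + 1)) (Cpow z n)) h))).
      pose proof (Hal (S n)). pose proof (Cmod_ge_0 (e' n)).
      apply Rle_trans with (1 * Cmod (e' n)).
      + apply Rmult_le_compat_r; auto.
      + rewrite Rmult_1_l. eapply Rle_trans; [apply H0|]. right; field; lra.
    - apply exR_scal, ex_series_poly2; auto. }
  rewrite Series_scal_l. fold M.
  assert (H2 : 2 * (H ^ 2 / r * M) <= H * (K * H)).
  { unfold K. assert (2 * (H ^ 2 / r * M) = H * ((2 * M / r) * H)) by (field; lra).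
    rewrite H0. apply Rmult_le_compat_l; auto. apply Rmult_le_compat_r; auto.
    assert (2 * M / r <= 2 * Rabs M / r).
    { unfold Rdiv. apply Rmult_le_compat_r; [left; apply Rinv_0_lt_compat; lra|].
      pose proof (Rle_abs M); lra. }
    lra. }
  assert (H3 : K * H <= eps).
  { apply Rlt_le. apply (Rmult_lt_compat_l K) in Hw2; auto.
    replace (K * (eps / K)) with eps in Hw2 by (field; lra). exact Hw2. }
  apply Rle_trans with (H * (K * H)); auto.
  rewrite (Rmult_comm eps). apply Rmult_le_compat_l; auto.
Qed.

Lemma Series_ge (a : nat -> R) (L : R) : ex_series a -> (forall N, L <= sum_n a N) -> L <= Series a.
Proof.
  intros Hex HN. pose proof (Series_correct a Hex) as Hs.
  assert (Hl : is_lim_seq (sum_n a) (Series a)) by exact Hs.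
  pose proof (is_lim_seq_le (fun _ => L) (sum_n a) L (Series a) HN (is_lim_seq_const L) Hl).
  simpl in H. exact H.
Qed.

Fixpoint Csum (u : nat -> C) (N : nat) : C :=
  match N with O => u O | S m => Cplus (Csum u m) (u (S m)) end.

Lemma sum_n_Re (u : nat -> C) N : sum_n (fun k => Re (u k)) N = Re (Csum u N).
Proof.
  induction N as [|N IH]; simpl.
  - rewrite sum_O; auto.
  - rewrite sum_Sn, IH. reflexivity.
Qed.

Lemma locally_disk (z : C) : Cmod z < 1 -> @locally (AbsRing_UniformSpace C_AbsRing) z (fun w => Cmod w < 1).
Proof.
  intros Hz. apply (@locally_le_locally_norm C_AbsRing (AbsRing_NormedModule C_AbsRing)).
  assert (Hp : 0 < 1 - Cmod z) by lra.
  exists (mkposreal _ Hp). intros w Hw. unfold ball_norm in Hw. simpl in Hw.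
  change (norm (minus w z)) with (Cmod (Cminus w z)) in Hw.
  pose proof (Cmod_sub_le w z). lra.
Qed.

Section Main.
Variables a b c d e : R.
Hypotheses (Ha : 0 < a) (Hb : 0 < b) (Hc : 0 < c) (Hd : 0 < d) (He : 0 < e)
  (H1 : d * e >= 2 * a * b * c) (H2 : d + e >= a + b + c)
  (H3 : d + e >= (a * b + b * c + a * c + 2 * (a + b + c) - 1 - 2 * a * b * c) / 2)
  (H4 : d + e >= 2 * (a * b + b * c + a * c) - 3 * a * b * c).

Definition beta (n : nat) : R := match n with O => 0 | S m => Aco a b c d e m end.

Lemma beta_bound n : Rabs (beta n) <= 1.
Proof.
  destruct n; simpl.
  - rewrite Rabs_R0; lra.
  - rewrite Rabs_pos_eq. apply Aco_le1; auto. left; apply Aco_pos; auto.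
Qed.

Definition fF (w : C) : C := Cmult w (F32 a b c d e w).

Lemma fF_PS (w : C) : Cmod w < 1 -> fF w = PS beta w.
Proof.
  intros Hw. pose proof (Cmod_ge_0 w).
  assert (Hr : 0 < (1 + Cmod w) / 2 < 1) by lra.
  assert (Hwr : Cmod w <= (1 + Cmod w) / 2) by lra.
  assert (HbA : forall n, Rabs (Aco a b c d e n) <= 1 * (INR n + 1) ^ 2).
  { intros n. rewrite Rabs_pos_eq by (left; apply Aco_pos; auto).
    pose proof (Aco_le1 a b c d e Ha Hb Hc Hd He H1 H2 H3 H4 n). pose proof (pos_INR n). nra. }
  assert (Hbb : forall n, Rabs (beta n) <= 1 * (INR n + 1) ^ 2).
  { intros n. pose proof (beta_bound n). pose proof (pos_INR n). nra. }
  pose proof (PS_Cok _ _ _ _ HbA Hr Hwr) as CA.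
  pose proof (PS_Cok _ _ _ _ Hbb Hr Hwr) as CB.
  unfold fF, F32, PS. 
  change (CSeries (F32_term a b c d e w)) with (CSeries (fun n => Cmult (RtoC (Aco a b c d e n)) (Cpow w n))).
  rewrite <- CSeries_scal by auto.
  rewrite (CSeries_shift _ CB). simpl beta.
  transitivity (CSeries (fun n => Cmult (beta (S n)) (Cpow w (S n)))).
  - apply CSeries_ext; intros n; simpl; ring.
  - simpl; ring.
Qed.

Lemma fF_deriv (z : C) : Cmod z < 1 -> Cderiv_at fF z (PS (Bco a b c d e) z).
Proof.
  intros Hz.
  apply is_derive_ext_loc with (PS beta).
  - eapply filter_imp; [|apply locally_disk; exact Hz].
    intros w Hw. symmetry. apply fF_PS; auto.
  - exact (PS_deriv beta z beta_bound Hz).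
Qed.

Lemma Cmod_pow_le (z : C) n : Cmod z <= 1 -> Cmod (Cpow z (S n)) <= Cmod z.
Proof.
  intros Hz. rewrite Cmod_pow. simpl. pose proof (Cmod_ge_0 z).
  assert (Cmod z ^ n <= 1 ^ n) by (apply pow_incr; lra). rewrite pow1 in H0.
  assert (0 <= Cmod z ^ n) by (apply pow_le; lra). nra.
Qed.

Lemma Re_le (x : C) : Re x <= Cmod x.
Proof. pose proof (re_le_Cmod x). pose proof (Rle_abs (Re x)). lra. Qed.

Lemma Re_bound (z : C) : Cmod z < 1 ->
  1 - Cmod z <= Re (Cmult (Cminus (RtoC 1) z) (PS (Bco a b c d e) z)).
Proof.
  intros Hz. pose proof (Cmod_ge_0 z) as Hz0.
  set (B := Bco a b c d e).
  assert (Hr : 0 < (1 + Cmod z) / 2 < 1) by lra.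
  assert (Hzr : Cmod z <= (1 + Cmod z) / 2) by lra.
  assert (HB : forall n, Rabs (B n) <= 1 * (INR n + 1) ^ 2).
  { intros n. unfold B. rewrite Rabs_pos_eq by (left; apply Bco_pos; auto).
    pose proof (Bco_le1 a b c d e Ha Hb Hc Hd He H1 H2 H3 H4 n). pose proof (pos_INR n). nra. }
  pose proof (PS_Cok _ _ _ _ HB Hr Hzr) as CB.
  unfold PS. rewrite <- CSeries_scal by auto.
  set (v := fun n => Cmult (Cminus (RtoC 1) z) (Cmult (RtoC (B n)) (Cpow z n))).
  change (Re (CSeries v)) with (Series (fun n => Re (v n))).
  apply Series_ge.
  { destruct (Cok_scal (Cminus (RtoC 1) z) _ CB); auto. }
  intros N. rewrite sum_n_Re.
  assert (Inv : forall N, 1 - Cmod z * (1 - B N) <= Re (Cplus (Csum v N) (Cmult (RtoC (B N)) (Cpow z (S N))))).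
  { induction N0 as [|N0 IH].
    - simpl Csum. unfold v.
      replace (Cplus (Cmult (Cminus (RtoC 1) z) (Cmult (RtoC (B 0%nat)) (Cpow z 0))) (Cmult (RtoC (B 0%nat)) (Cpow z 1))) with (RtoC (B 0%nat)) by (simpl; ring).
      unfold B; rewrite Bco_0. simpl. lra.
    - simpl Csum.
      replace (Cplus (Cplus (Csum v N0) (v (S N0))) (Cmult (RtoC (B (S N0))) (Cpow z (S (S N0)))))
        with (Cminus (Cplus (Csum v N0) (Cmult (RtoC (B N0)) (Cpow z (S N0)))) (Cmult (RtoC (B N0 - B (S N0))) (Cpow z (S N0)))).
      2: { unfold v. rewrite RtoC_minus. change (Cpow z (S (S N0))) with (Cmult z (Cpow z (S N0))). ring. }
      unfold Cminus. rewrite re_plus, re_opp.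
      pose proof (Re_le (Cmult (RtoC (B N0 - B (S N0))) (Cpow z (S N0)))).
      rewrite Cmod_mult, Cmod_R in H.
      pose proof (Bco_decr a b c d e Ha Hb Hc Hd He H1 H2 H3 H4 N0). fold B in H0.
      rewrite Rabs_pos_eq in H by lra.
      pose proof (Cmod_pow_le z N0 (Rlt_le _ _ Hz)).
      assert ((B N0 - B (S N0)) * Cmod (Cpow z (S N0)) <= (B N0 - B (S N0)) * Cmod z) by (apply Rmult_le_compat_l; lra).
      lra. }
  specialize (Inv N).
  replace (Csum v N) with (Cminus (Cplus (Csum v N) (Cmult (RtoC (B N)) (Cpow z (S N)))) (Cmult (RtoC (B N)) (Cpow z (S N)))) by ring.
  unfold Cminus at 1. rewrite re_plus, re_opp.
  pose proof (Re_le (Cmult (RtoC (B N)) (Cpow z (S N)))).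
  rewrite Cmod_mult, Cmod_R in H.
  assert (0 < B N) by (apply Bco_pos; auto).
  assert (B N <= 1) by (apply Bco_le1; auto).
  rewrite Rabs_pos_eq in H by lra.
  pose proof (Cmod_pow_le z N (Rlt_le _ _ Hz)).
  assert (B N * Cmod (Cpow z (S N)) <= B N * Cmod z) by (apply Rmult_le_compat_l; lra).
  nra.
Qed.

End Main.

Lemma CR_deriv (F : C -> C) (x y p q : R) :
  differentiable_pt_lim (fun u v => Re (F (u, v))) x y p (- q) ->
  differentiable_pt_lim (fun u v => Im (F (u, v))) x y q p ->
  Cderiv_at F (x, y) (p, q).
Proof.
  intros Hu Hv. apply is_derive_C_small. intros eps Heps.
  assert (He2 : 0 < eps / 2) by lra.
  destruct (Hu (mkposreal _ He2)) as [d1 Hd1].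
  destruct (Hv (mkposreal _ He2)) as [d2 Hd2].
  exists (Rmin d1 d2). split; [apply Rmin_pos; apply cond_pos|].
  intros [u v] Hw.
  pose proof (Re_le_Cmod (Cminus (u, v) (x, y))) as Hre.
  pose proof (Im_le_Cmod (Cminus (u, v) (x, y))) as Him.
  simpl in Hre, Him.
  assert (Hmax : Rmax (Rabs (u - x)) (Rabs (v - y)) <= Cmod (Cminus (u, v) (x, y))).
  { unfold Rmax; destruct Rle_dec; unfold Rminus; lra. }
  assert (Hux : Rabs (u - x) < d1).
  { unfold Rminus. eapply Rle_lt_trans; [apply Hre|]. eapply Rlt_le_trans; [apply Hw| apply Rmin_l]. }
  assert (Hvy : Rabs (v - y) < d1).
  { unfold Rminus. eapply Rle_lt_trans; [apply Him|]. eapply Rlt_le_trans; [apply Hw| apply Rmin_l]. }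
  assert (Hux2 : Rabs (u - x) < d2).
  { unfold Rminus. eapply Rle_lt_trans; [apply Hre|]. eapply Rlt_le_trans; [apply Hw| apply Rmin_r]. }
  assert (Hvy2 : Rabs (v - y) < d2).
  { unfold Rminus. eapply Rle_lt_trans; [apply Him|]. eapply Rlt_le_trans; [apply Hw| apply Rmin_r]. }
  specialize (Hd1 u v Hux Hvy). specialize (Hd2 u v Hux2 Hvy2). simpl in Hd1, Hd2.
  eapply Rle_trans; [apply Cmod_le_sum|].
  destruct (F (u, v)) as [a1 b1] eqn:EF1. destruct (F (x, y)) as [a2 b2] eqn:EF2.
  simpl in Hd1, Hd2. simpl.
  replace (a1 + - a2 + - ((u + - x) * p - (v + - y) * q)) with (a1 - a2 - (p * (u - x) + - q * (v - y))) by ring.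
  replace (b1 + - b2 + - ((u + - x) * q + (v + - y) * p)) with (b1 - b2 - (q * (u - x) + p * (v - y))) by ring.
  assert (eps / 2 * Rmax (Rabs (u - x)) (Rabs (v - y)) <= eps / 2 * Cmod (Cminus (u, v) (x, y))) by (apply Rmult_le_compat_l; lra). lra.
Qed.

Lemma ln_sqrt_all (X : R) : 0 <= X -> ln (sqrt X) = ln X / 2.
Proof.
  intros HX. destruct (Req_dec X 0) as [E|E].
  - subst. rewrite sqrt_0. unfold ln. destruct (Rlt_dec 0 0) as [H0|H0]; [exfalso; apply (Rlt_irrefl 0 H0)|]. field.
  - assert (HX2 : 0 < X) by lra. pose proof (sqrt_lt_R0 X HX2). rewrite <- (sqrt_sqrt X) at 2 by lra. rewrite ln_mult by lra. field.
Qed.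

Definition u2 (p q : R) := - ln ((1 - p) ^ 2 + q ^ 2) / 2.
Definition v2 (p q : R) := atan (q / (1 - p)).

Lemma nl_re p q : Re (neglog1m (p, q)) = u2 p q.
Proof.
  unfold neglog1m, u2, Cmod, Re; simpl.
  replace ((1 + - p) * ((1 + - p) * 1) + (0 + - q) * ((0 + - q) * 1)) with ((1 - p) * ((1 - p) * 1) + q * (q * 1)) by ring.
  rewrite ln_sqrt_all. { field. }
  pose proof (Rle_0_sqr (1 - p)). pose proof (Rle_0_sqr q). unfold Rsqr in *. lra.
Qed.

Lemma nl_im p q : Im (neglog1m (p, q)) = v2 p q.
Proof.
  unfold neglog1m, v2, Im, Re; simpl.
  replace ((0 + - q) / (1 + - p)) with (- (q / (1 - p))).
  - rewrite atan_opp. ring.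
  - unfold Rdiv. replace (1 + - p) with (1 - p) by ring. ring.
Qed.

Lemma ball_R (x e u : R) : ball x e u -> Rabs (u - x) < e.
Proof. intros H. exact H. Qed.

Lemma locally_lt1 (x y : R) (P : R -> R -> Prop) : x < 1 ->
  (forall u v, u < 1 -> P u v) -> locally (x, y) (fun w : R * R => P (fst w) (snd w)).
Proof.
  intros Hx HP. assert (Hp : 0 < (1 - x) / 2) by lra.
  exists (mkposreal _ Hp). intros [u v] [Hu Hv]. simpl in *.
  apply ball_R in Hu. apply HP. apply Rabs_def2 in Hu. simpl in Hu. lra.
Qed.

Lemma cont_ratio (N : R -> R -> R) (x y : R) :
  continuity_2d_pt N x y ->
  (1 - x) ^ 2 + y ^ 2 <> 0 ->
  continuous (fun w : R * R => N (fst w) (snd w) / ((1 - fst w) ^ 2 + (snd w) ^ 2)) (x, y).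
Proof.
  intros HN Hne.
  apply (proj1 (continuity_2d_pt_filterlim (fun p q => N p q / ((1 - p) ^ 2 + q ^ 2)) x y)).
  apply continuity_2d_pt_ext with (fun p q => N p q * / ((1 - p) * (1 - p) + q * q)).
  { intros; unfold Rdiv; simpl; f_equal; f_equal; ring. }
  apply continuity_2d_pt_mult; auto.
  apply continuity_2d_pt_inv.
  2: { replace ((1 - x) * (1 - x) + y * y) with ((1 - x) ^ 2 + y ^ 2) by ring. auto. }
  apply continuity_2d_pt_plus; apply continuity_2d_pt_mult;
   try apply continuity_2d_pt_id2;
   apply continuity_2d_pt_minus; try apply continuity_2d_pt_const; apply continuity_2d_pt_id1.
Qed.

Lemma diff_u2 (x y : R) : x < 1 ->
  differentiable_pt_lim u2 x y ((1 - x) / ((1 - x) ^ 2 + y ^ 2)) (- y / ((1 - x) ^ 2 + y ^ 2)).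
Proof.
  intros Hx. assert (HX : 0 < (1 - x) ^ 2 + y ^ 2) by nra.
  apply filterdiff_differentiable_pt_lim.
  eapply filterdiff_ext_lin.
  - apply (is_derive_filterdiff u2 x y (fun p q => (1 - p) / ((1 - p) ^ 2 + q ^ 2)) (- y / ((1 - x) ^ 2 + y ^ 2))).
    + apply (locally_lt1 x y (fun p q => is_derive (fun z => u2 z q) p ((1 - p) / ((1 - p) ^ 2 + q ^ 2)))); auto.
      intros p q Hp. unfold u2. assert (0 < (1 - p) ^ 2 + q ^ 2) by nra.
      auto_derive. { simpl in H |- *. lra. } simpl in H |- *. field. lra.
    + unfold u2. auto_derive. { simpl in HX |- *. lra. } simpl in HX |- *. field. lra.
    + apply (cont_ratio (fun p q => 1 - p)); [|lra].
      apply continuity_2d_pt_minus; [apply continuity_2d_pt_const|apply continuity_2d_pt_id1].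
  - intros [h k]. simpl. reflexivity.
Qed.

Lemma diff_v2 (x y : R) : x < 1 ->
  differentiable_pt_lim v2 x y (y / ((1 - x) ^ 2 + y ^ 2)) ((1 - x) / ((1 - x) ^ 2 + y ^ 2)).
Proof.
  intros Hx. assert (HX : 0 < (1 - x) ^ 2 + y ^ 2) by nra.
  apply filterdiff_differentiable_pt_lim.
  eapply filterdiff_ext_lin.
  - apply (is_derive_filterdiff v2 x y (fun p q => q / ((1 - p) ^ 2 + q ^ 2)) ((1 - x) / ((1 - x) ^ 2 + y ^ 2))).
    + apply (locally_lt1 x y (fun p q => is_derive (fun z => v2 z q) p (q / ((1 - p) ^ 2 + q ^ 2)))); auto.
      intros p q Hp. unfold v2. assert (0 < (1 - p) ^ 2 + q ^ 2) by nra.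
      auto_derive. { lra. } simpl in H |- *. field. split; [lra|]. 
      replace ((1 - p) * (1 - p) + q * q) with ((1 - p) * ((1 - p) * 1) + q * (q * 1)) by ring. lra.
    + unfold v2. auto_derive. { lra. } simpl in HX |- *. field. split; [lra|].
      replace ((1 - x) * (1 - x) + y * y) with ((1 - x) * ((1 - x) * 1) + y * (y * 1)) by ring. lra.
    + apply (cont_ratio (fun p q => q)); [apply continuity_2d_pt_id2|lra].
  - intros [h k]. simpl. reflexivity.
Qed.

Lemma neglog1m_deriv (z : C) : Cmod z < 1 ->
  Cderiv_at neglog1m z (Cinv (Cminus (RtoC 1) z)).
Proof.
  intros Hz. destruct z as [x y].
  assert (Hx : x < 1).
  { pose proof (Re_le_Cmod (x, y)). simpl in H. pose proof (Rle_abs x). lra. }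
  assert (HX : 0 < (1 - x) ^ 2 + y ^ 2) by nra.
  replace (Cinv (Cminus (RtoC 1) (x, y))) with ((1 - x) / ((1 - x) ^ 2 + y ^ 2), y / ((1 - x) ^ 2 + y ^ 2)).
  2: { unfold Cinv, Cminus, Cplus, Copp, RtoC; simpl. f_equal; field; simpl in HX; lra. }
  apply CR_deriv.
  - apply differentiable_pt_lim_ext with u2.
    { exists (mkposreal 1 Rlt_0_1). intros; rewrite nl_re; auto. }
    replace (- (y / ((1 - x) ^ 2 + y ^ 2))) with (- y / ((1 - x) ^ 2 + y ^ 2)) by (field; lra).
    apply diff_u2; auto.
  - apply differentiable_pt_lim_ext with v2.
    { exists (mkposreal 1 Rlt_0_1). intros; rewrite nl_im; auto. }
    apply diff_v2; auto.
Qed.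

Lemma Cderiv_eps (F : C -> C) (z l : C) : Cderiv_at F z l ->
  forall eps, 0 < eps -> exists delta, 0 < delta /\ forall w, Cmod (Cminus w z) < delta ->
      Cmod (Cminus (Cminus (F w) (F z)) (Cmult (Cminus w z) l)) <= eps * Cmod (Cminus w z).
Proof.
  intros [_ Hd] eps Heps.
  specialize (Hd z (fun P H => H) (mkposreal eps Heps)).
  destruct Hd as [d Hd]. exists d. split; [apply cond_pos|].
  intros w Hw. apply (Hd w). exact Hw.
Qed.

Lemma normCR (h : C) : @norm R_AbsRing C_R_NormedModule h = Cmod h.
Proof.
  destruct h as [x y].
  change (@norm R_AbsRing C_R_NormedModule (x, y)) with (sqrt (Rabs x ^ 2 + Rabs y ^ 2)).
  rewrite !pow2_abs. reflexivity.
Qed.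

Lemma Cderiv_Rdiff (F : C -> C) (z l : C) : Cderiv_at F z l ->
  @filterdiff R_AbsRing C_R_NormedModule C_R_NormedModule F (locally z) (fun h => Cmult h l).
Proof.
  intros HF. split.
  - split.
    + intros [x1 x2] [y1 y2]. unfold Cmult. simpl. unfold plus; simpl. unfold prod_plus; simpl. unfold plus; simpl. f_equal; ring.
    + intros k [x1 x2]. unfold Cmult. simpl. unfold scal; simpl. unfold prod_scal; simpl. unfold scal; simpl. unfold mult; simpl. f_equal; ring.
    + exists (Cmod l + 1). split. { pose proof (Cmod_ge_0 l); lra. }
      intros x. rewrite !normCR, Cmod_mult. pose proof (Cmod_ge_0 x). pose proof (Cmod_ge_0 l). nra.
  - intros x Hx. pose proof (@is_filter_lim_locally_unique R_AbsRing C_R_NormedModule z x Hx) as E. subst x.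
    intros eps. apply (@locally_le_locally_norm R_AbsRing C_R_NormedModule).
    destruct (Cderiv_eps F z l HF eps (cond_pos eps)) as [d [Hd Hw]].
    exists (mkposreal d Hd). intros w Hb. unfold ball_norm in Hb. simpl in Hb.
    rewrite normCR in Hb. rewrite !normCR. apply Hw. exact Hb.
Qed.

Lemma multAR (x y : R) : @mult (AbsRing.Ring R_AbsRing) x y = x * y.
Proof. reflexivity. Qed.

Lemma is_derive_pair (u v : R -> R) (t du dv : R) :
  is_derive u t du -> is_derive v t dv ->
  @is_derive R_AbsRing C_R_NormedModule (fun s => (u s, v s) : C) t ((du, dv) : C).
Proof.
  intros Hu Hv. unfold is_derive in *.
  assert (H := @filterdiff_plus_fct R_AbsRing R_NormedModule C_R_NormedModule (locally t) _
     (fun s => @scal R_AbsRing C_R_NormedModule (u s) ((1, 0) : C))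
     (fun s => @scal R_AbsRing C_R_NormedModule (v s) ((0, 1) : C)) _ _
     (@filterdiff_scal_l_fct R_AbsRing R_NormedModule C_R_NormedModule (locally t) _ ((1,0) : C) u _ Hu)
     (@filterdiff_scal_l_fct R_AbsRing R_NormedModule C_R_NormedModule (locally t) _ ((0,1) : C) v _ Hv)).
  eapply filterdiff_ext_lin.
  - eapply filterdiff_ext; [|exact H].
    intros s. cbn. change (((u s * 1 + v s * 0, u s * 0 + v s * 1) : C) = (u s, v s)). apply (f_equal2 (@pair R R)); ring.
  - intros h. cbn. change (((h * du * 1 + h * dv * 0, h * du * 0 + h * dv * 1) : C) = (h * du, h * dv)). apply (f_equal2 (@pair R R)); ring.
Qed.

Lemma chain_real (F : C -> C) (Fd : C) (g : R -> C) (gd : C) (t : R) (k : C) :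
  Cderiv_at F (g t) Fd ->
  @is_derive R_AbsRing C_R_NormedModule g t gd ->
  derivable_pt_lim (fun s => Re (Cmult (F (g s)) k)) t (Re (Cmult (Cmult Fd gd) k)).
Proof.
  intros HF Hg. apply is_derive_Reals.
  pose proof (Cderiv_Rdiff F (g t) Fd HF) as HF'.
  pose proof (@filterdiff_comp' R_AbsRing R_NormedModule C_R_NormedModule C_R_NormedModule g F t _ _ Hg HF') as H.
  assert (Hlin : @is_linear R_AbsRing C_R_NormedModule R_NormedModule (fun x : C => Re (Cmult x k))).
  { split.
    - intros [x1 x2] [y1 y2]. unfold Cmult, Re. simpl. unfold plus; simpl. unfold prod_plus; simpl. unfold plus; simpl. ring.
    - intros r [x1 x2]. unfold Cmult, Re. simpl. unfold scal; simpl. unfold prod_scal; simpl. unfold scal, mult; simpl. ring.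
    - exists (Cmod k + 1). split. { pose proof (Cmod_ge_0 k); lra. }
      intros x. rewrite normCR. change (norm (Re (Cmult x k))) with (Rabs (Re (Cmult x k))).
      eapply Rle_trans; [apply Re_le_Cmod|]. rewrite Cmod_mult.
      pose proof (Cmod_ge_0 x). pose proof (Cmod_ge_0 k). nra. }
  pose proof (@filterdiff_comp' R_AbsRing R_NormedModule C_R_NormedModule R_NormedModule _ _ t _ _ H (filterdiff_linear _ Hlin)) as H2.
  unfold is_derive. eapply filterdiff_ext_lin; [exact H2|].
  intros h. simpl. destruct gd as [g1 g2], Fd as [f1 f2], k as [k1 k2]. unfold Cmult, Re. simpl.
  unfold scal; simpl. unfold prod_scal; simpl. unfold scal, mult; simpl. ring.
Qed.

Definition Ex (p : C) : C := (exp (Re p) * cos (Im p), exp (Re p) * sin (Im p)).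
Definition Lw (w : C) : C := (ln (Cmod w), atan (Im w / Re w)).

Lemma Ex_Lw (w : C) : 0 < Re w -> Ex (Lw w) = w.
Proof.
  destruct w as [x y]. unfold Re, Im, Ex, Lw; simpl. intros Hx.
  assert (HC : 0 < Cmod (x, y)).
  { unfold Cmod; simpl. apply sqrt_lt_R0. nra. }
  rewrite exp_ln by auto. rewrite cos_atan, sin_atan.
  assert (E : 1 + (y / x)² = Rsqr (Cmod (x, y) / x)).
  { unfold Rsqr, Cmod; simpl. unfold Rdiv. rewrite !Rmult_assoc.
    replace (sqrt (x * (x * 1) + y * (y * 1)) * (/ x * (sqrt (x * (x * 1) + y * (y * 1)) * / x)))
      with ((sqrt (x * (x * 1) + y * (y * 1)) * sqrt (x * (x * 1) + y * (y * 1))) * (/ x * / x)) by ring.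
    rewrite sqrt_sqrt by nra. field. lra. }
  rewrite E, sqrt_Rsqr by (apply Rlt_le, Rdiv_lt_0_compat; auto).
  f_equal; field; lra.
Qed.

Lemma Cmod_1mEx_sq (p : C) :
  Cmod (Cminus (RtoC 1) (Ex p)) ^ 2 = 1 + exp (Re p) * (exp (Re p) - 2 * cos (Im p)).
Proof.
  rewrite Cmod2_alt. unfold Ex, Cminus, Cplus, Copp, RtoC, Re, Im; simpl.
  pose proof (sin2_cos2 (snd p)). unfold Rsqr in H.
  replace ((1 + - (exp (fst p) * cos (snd p))) * ((1 + - (exp (fst p) * cos (snd p))) * 1) +
           (0 + - (exp (fst p) * sin (snd p))) * ((0 + - (exp (fst p) * sin (snd p))) * 1))
    with (1 - 2 * exp (fst p) * cos (snd p) + exp (fst p) * exp (fst p) * (sin (snd p) * sin (snd p) + cos (snd p) * cos (snd p))) by ring.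
  rewrite H. ring.
Qed.

Lemma inD_Ex (p : C) : Cmod (Cminus (RtoC 1) (Ex p)) < 1 <-> exp (Re p) < 2 * cos (Im p).
Proof.
  pose proof (Cmod_1mEx_sq p) as E. pose proof (exp_pos (Re p)) as Hp.
  pose proof (Cmod_ge_0 (Cminus (RtoC 1) (Ex p))) as H0.
  split; intros H.
  - assert (Cmod (Cminus (RtoC 1) (Ex p)) ^ 2 < 1) by (simpl; nra).
    rewrite E in H1. nra.
  - assert (Cmod (Cminus (RtoC 1) (Ex p)) ^ 2 < 1) by (rewrite E; nra).
    simpl in H1. nra.
Qed.

Lemma tan_le (a b : R) : - PI / 2 < a -> a <= b -> b < PI / 2 -> tan a <= tan b.
Proof.
  intros H1 H2 H3. destruct (Req_dec a b) as [E|E].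
  - subst; lra.
  - left; apply tan_increasing; lra.
Qed.

Lemma lncos_deriv (s : R) : - PI / 2 < s < PI / 2 -> is_derive (fun u => ln (cos u)) s (- tan s).
Proof.
  intros Hs. assert (0 < cos s) by (apply cos_gt_0; lra).
  auto_derive. { lra. } unfold tan. field. lra.
Qed.

Lemma lncos_mvt (x m : R) : - PI / 2 < x < PI / 2 -> - PI / 2 < m < PI / 2 ->
  exists c, Rmin x m <= c <= Rmax x m /\ ln (cos m) - ln (cos x) = - tan c * (m - x).
Proof.
  intros Hx Hm.
  assert (Hint : forall s, Rmin x m <= s <= Rmax x m -> - PI / 2 < s < PI / 2).
  { intros s Hs. unfold Rmin, Rmax in Hs. destruct (Rle_dec x m); lra. }
  apply (MVT_gen (fun u => ln (cos u)) x m (fun s => - tan s)).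
  - intros s Hs. apply lncos_deriv. apply Hint; lra.
  - intros s Hs. apply continuity_pt_filterlim.
    exact (@ex_derive_continuous R_AbsRing R_NormedModule (fun u => ln (cos u)) s (ex_intro _ _ (lncos_deriv s (Hint s Hs)))).
Qed.

Lemma conv_lt (a x y t : R) : a < x -> a < y -> 0 <= t <= 1 -> a < (1 - t) * x + t * y.
Proof.
  intros H1 H2 Ht. destruct (Rlt_le_dec t 1).
  - assert (0 < (1 - t) * (x - a)) by (apply Rmult_lt_0_compat; lra).
    assert (0 <= t * (y - a)) by (apply Rmult_le_pos; lra). nra.
  - assert (t = 1) by lra. subst. lra.
Qed.

Lemma conv_gt (a x y t : R) : x < a -> y < a -> 0 <= t <= 1 -> (1 - t) * x + t * y < a.
Proof.
  intros H1 H2 Ht. pose proof (conv_lt (-a) (-x) (-y) t). lra.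
Qed.

Lemma lncos_concave (x y t : R) : - PI / 2 < x < PI / 2 -> - PI / 2 < y < PI / 2 -> 0 <= t <= 1 ->
  (1 - t) * ln (cos x) + t * ln (cos y) <= ln (cos ((1 - t) * x + t * y)).
Proof.
  intros Hx Hy Ht. set (m := (1 - t) * x + t * y).
  assert (Hm : - PI / 2 < m < PI / 2) by (unfold m; split; [apply conv_lt|apply conv_gt]; lra).
  destruct (lncos_mvt x m Hx Hm) as [c1 [Hc1 E1]].
  destruct (lncos_mvt m y Hm Hy) as [c2 [Hc2 E2]].
  assert (Hmx : m - x = t * (y - x)) by (unfold m; ring).
  assert (Hym : y - m = (1 - t) * (y - x)) by (unfold m; ring).
  rewrite Hmx in E1. rewrite Hym in E2.
  assert (K : (y - x) * (tan c1 - tan c2) <= 0).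
  { unfold Rmin, Rmax in Hc1, Hc2.
    destruct (Rle_dec x y) as [Hxy|Hxy].
    - assert (x <= m) by (unfold m; nra). assert (m <= y) by (unfold m; nra).
      assert (x <= c1 <= m /\ m <= c2 <= y) by (destruct (Rle_dec x m); destruct (Rle_dec m y); lra).
      assert (tan c1 <= tan c2) by (apply tan_le; lra). nra.
    - apply Rnot_le_lt in Hxy. assert (m <= x) by (unfold m; nra). assert (y <= m) by (unfold m; nra).
      assert (m <= c1 <= x /\ y <= c2 <= m) by (destruct (Rle_dec x m); destruct (Rle_dec m y); lra).
      assert (tan c2 <= tan c1) by (apply tan_le; lra). nra. }
  assert (0 <= t * (1 - t)) by nra.
  assert (t * (1 - t) * ((y - x) * (tan c1 - tan c2)) <= 0).
  { replace 0 with (t * (1 - t) * 0) by ring. apply Rmult_le_compat_l; auto. }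
  nra.
Qed.

Lemma path_inD (a1 b1 a2 b2 s : R) :
  exp a1 < 2 * cos b1 -> exp a2 < 2 * cos b2 ->
  - PI / 2 < b1 < PI / 2 -> - PI / 2 < b2 < PI / 2 -> 0 <= s <= 1 ->
  Cmod (Cminus (RtoC 1) (Ex (a1 + s * (a2 - a1), b1 + s * (b2 - b1)))) < 1.
Proof.
  intros E1 E2 B1 B2 Hs. apply inD_Ex. unfold Re, Im; simpl.
  assert (C1 : 0 < cos b1) by (apply cos_gt_0; lra).
  assert (C2 : 0 < cos b2) by (apply cos_gt_0; lra).
  assert (L1 : a1 < ln 2 + ln (cos b1)).
  { rewrite <- ln_mult by lra. rewrite <- (ln_exp a1) at 1. apply ln_increasing; auto. apply exp_pos. }
  assert (L2 : a2 < ln 2 + ln (cos b2)).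
  { rewrite <- ln_mult by lra. rewrite <- (ln_exp a2) at 1. apply ln_increasing; auto. apply exp_pos. }
  pose proof (lncos_concave b1 b2 s B1 B2 Hs) as Hc.
  pose proof (conv_lt 0 (ln 2 + ln (cos b1) - a1) (ln 2 + ln (cos b2) - a2) s) as Hv.
  assert (HB : - PI / 2 < (1 - s) * b1 + s * b2 < PI / 2) by (split; [apply conv_lt|apply conv_gt]; lra).
  assert (C3 : 0 < cos ((1 - s) * b1 + s * b2)) by (apply cos_gt_0; lra).
  replace (b1 + s * (b2 - b1)) with ((1 - s) * b1 + s * b2) by ring.
  replace (2 * cos ((1 - s) * b1 + s * b2)) with (exp (ln 2 + ln (cos ((1 - s) * b1 + s * b2)))).
  2: { rewrite exp_plus, !exp_ln; lra. }
  apply exp_increasing. nra.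
Qed.

Section Univ.
Variables a b c d e : R.
Hypotheses (Ha : 0 < a) (Hb : 0 < b) (Hc : 0 < c) (Hd : 0 < d) (He : 0 < e)
  (H1 : d * e >= 2 * a * b * c) (H2 : d + e >= a + b + c)
  (H3 : d + e >= (a * b + b * c + a * c + 2 * (a + b + c) - 1 - 2 * a * b * c) / 2)
  (H4 : d + e >= 2 * (a * b + b * c + a * c) - 3 * a * b * c).

Lemma Re_pos_1m (z : C) : Cmod z < 1 -> 0 < Re (Cminus (RtoC 1) z).
Proof.
  intros Hz. pose proof (Re_le_Cmod z). pose proof (Rle_abs (Re z)).
  unfold Cminus, Cplus, Copp, RtoC, Re in *; simpl in *. lra.
Qed.

Lemma univalent (z1 z2 : C) : Cmod z1 < 1 -> Cmod z2 < 1 ->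
  fF a b c d e z1 = fF a b c d e z2 -> z1 = z2.
Proof.
  intros Hz1 Hz2 Hf. destruct (Ceq_dec z1 z2) as [|Hne]; auto. exfalso.
  set (w1 := Cminus (RtoC 1) z1). set (w2 := Cminus (RtoC 1) z2).
  assert (Rw1 : 0 < Re w1) by (apply Re_pos_1m; auto).
  assert (Rw2 : 0 < Re w2) by (apply Re_pos_1m; auto).
  set (L1 := Lw w1). set (L2 := Lw w2).
  assert (EL1 : Ex L1 = w1) by (apply Ex_Lw; auto).
  assert (EL2 : Ex L2 = w2) by (apply Ex_Lw; auto).
  destruct L1 as [a1 b1] eqn:DL1. destruct L2 as [a2 b2] eqn:DL2.
  assert (B1 : - PI / 2 < b1 < PI / 2).
  { assert (b1 = Im L1) by (rewrite DL1; reflexivity). rewrite H. unfold L1, Lw, Im; simpl. apply atan_bound. }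
  assert (B2 : - PI / 2 < b2 < PI / 2).
  { assert (b2 = Im L2) by (rewrite DL2; reflexivity). rewrite H. unfold L2, Lw, Im; simpl. apply atan_bound. }
  assert (I1 : exp a1 < 2 * cos b1).
  { apply (proj1 (inD_Ex (a1, b1))). rewrite EL1. unfold w1.
    replace (Cminus (RtoC 1) (Cminus (RtoC 1) z1)) with z1 by ring. auto. }
  assert (I2 : exp a2 < 2 * cos b2).
  { apply (proj1 (inD_Ex (a2, b2))). rewrite EL2. unfold w2.
    replace (Cminus (RtoC 1) (Cminus (RtoC 1) z2)) with z2 by ring. auto. }
  set (D := ((a2 - a1, b2 - b1) : C)).
  assert (HD : 0 < Cmod D).
  { apply Cmod_gt_0. intros HD0. apply Hne. unfold D in HD0.
    injection HD0 as E1 E2. assert (a2 = a1) by lra. assert (b2 = b1) by lra. subst a2 b2.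
    assert (w1 = w2) by (rewrite <- EL1, <- EL2; reflexivity).
    unfold w1, w2 in H.
    replace z1 with (Cminus (RtoC 1) (Cminus (RtoC 1) z1)) by ring. rewrite H. ring. }
  set (P := fun s : R => ((a1 + s * (a2 - a1), b1 + s * (b2 - b1)) : C)).
  set (g := fun s : R => Cminus (RtoC 1) (Ex (P s))).
  assert (g0 : g 0 = z1).
  { unfold g, P. replace ((a1 + 0 * (a2 - a1), b1 + 0 * (b2 - b1)) : C) with ((a1, b1) : C) by (f_equal; ring).
    rewrite EL1. unfold w1. ring. }
  assert (g1 : g 1 = z2).
  { unfold g, P. replace ((a1 + 1 * (a2 - a1), b1 + 1 * (b2 - b1)) : C) with ((a2, b2) : C) by (f_equal; ring).
    rewrite EL2. unfold w2. ring. }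
  assert (gD : forall s, 0 <= s <= 1 -> Cmod (g s) < 1).
  { intros s Hs. unfold g, P. apply path_inD; auto. }
  set (k := Copp (Cconj D)).
  set (gd := fun s : R => Copp (Cmult (Ex (P s)) D)).
  assert (Hg : forall s, @is_derive R_AbsRing C_R_NormedModule g s (gd s)).
  { intros s.
    apply (is_derive_pair (fun s => 1 + - (exp (a1 + s * (a2 - a1)) * cos (b1 + s * (b2 - b1))))
                          (fun s => 0 + - (exp (a1 + s * (a2 - a1)) * sin (b1 + s * (b2 - b1))))).
    - auto_derive; auto. unfold gd, Ex, Cmult, Copp, Re, Im, D, P; simpl. ring.
    - auto_derive; auto. unfold gd, Ex, Cmult, Copp, Re, Im, D, P; simpl. ring. }
  set (B := Bco a b c d e).
  set (psi := fun s => Re (Cmult (fF a b c d e (g s)) k)).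
  set (psi' := fun s => Re (Cmult (Cmult (PS B (g s)) (gd s)) k)).
  destruct (MVT_cor2 psi psi' 0 1 Rlt_0_1) as [t [Ht Ht01]].
  { intros s Hs. unfold psi, psi'. apply chain_real; [|apply Hg].
    apply fF_deriv; auto. }
  unfold psi in Ht. rewrite g0, g1, Hf in Ht.
  assert (Hpos : 0 < psi' t).
  { unfold psi'.
    assert (Eq : Cmult (Cmult (PS B (g t)) (gd t)) k =
                 Cmult (Cmult (Cminus (RtoC 1) (g t)) (PS B (g t))) (RtoC (Cmod D ^ 2))).
    { rewrite Cmod2_conj. unfold gd, k.
      replace (Ex (P t)) with (Cminus (RtoC 1) (g t)) by (unfold g; ring). ring. }
    rewrite Eq, re_scal_r.
    pose proof (Re_bound a b c d e Ha Hb Hc Hd He H1 H2 H3 H4 (g t) (gD t ltac:(lra))).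
    fold B in H. pose proof (gD t ltac:(lra)).
    apply Rmult_lt_0_compat; [lra|]. apply pow_lt; auto. }
  rewrite Rminus_diag in Ht. nra.
Qed.

End Univ.

Theorem theorem2p1 (a b c d e : R) :
  0 < a -> 0 < b -> 0 < c ->
  (forall n : nat, d <> - INR n) -> (forall n : nat, e <> - INR n) ->
  d * e >= 2 * a * b * c ->
  d + e >= a + b + c ->
  d + e >= (a * b + b * c + a * c + 2 * (a + b + c) - 1 - 2 * a * b * c) / 2 ->
  d + e >= 2 * (a * b + b * c + a * c) - 3 * a * b * c ->
  close_to_convex_wrt (fun z => Cmult z (F32 a b c d e z)) neglog1m.
Proof.
  intros Ha Hb Hc Hdn Hen H1 H2 H3 H4.
  assert (Hde : 0 < d * e).
  { assert (0 < a * b * c) by (repeat apply Rmult_lt_0_compat; auto). lra. }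
  assert (Hsum : 0 < d + e) by lra.
  assert (Hd : 0 < d).
  { destruct (Rlt_or_le 0 d) as [|Hd]; auto. exfalso.
    destruct (Rle_lt_or_eq_dec _ _ Hd) as [Hd'|Hd'].
    - assert (e < 0) by nra. lra.
    - subst. lra. }
  assert (He : 0 < e) by nra.
  change (fun z => Cmult z (F32 a b c d e z)) with (fF a b c d e).
  set (B := Bco a b c d e).
  assert (Hder : forall z, Cmod z < 1 -> Cderiv_at (fF a b c d e) z (PS B z)).
  { intros z Hz. apply fF_deriv; auto. }
  split; [|split; [|split; [|split]]].
  - intros z Hz. exists (PS B z). apply Hder. exact Hz.
  - unfold fF. apply Cmult_0_l.
  - assert (E : PS B (RtoC 0) = RtoC 1).
    { assert (HB : forall n, Rabs (B n) <= 1 * (INR n + 1) ^ 2).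
      { intros n. unfold B. rewrite Rabs_pos_eq by (left; apply Bco_pos; auto).
        pose proof (Bco_le1 a b c d e Ha Hb Hc Hd He H1 H2 H3 H4 n). pose proof (pos_INR n). nra. }
      assert (Hr : 0 < 1 / 2 < 1) by lra.
      assert (H0r : Cmod (RtoC 0) <= 1 / 2) by (rewrite Cmod_0; lra).
      pose proof (PS_Cok _ _ _ _ HB Hr H0r) as CB.
      unfold PS. rewrite (CSeries_shift _ CB).
      pose proof (Cok_shift _ CB) as CB'.
      rewrite (CSeries_ext _ (fun n => Cmult (RtoC 0) (Cmult (RtoC (B (S n))) (Cpow (RtoC 0) (S n))))).
      2: { intros n. simpl. ring. }
      rewrite (CSeries_scal _ _ CB'). unfold B. simpl. rewrite Bco_0. ring. }
    rewrite <- E. apply Hder. rewrite Cmod_0. lra.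
  - intros z w Hz Hw Hzw. apply (univalent a b c d e Ha Hb Hc Hd He H1 H2 H3 H4); auto.
  - intros z Hz f' g' Hf Hg.
    pose proof (is_C_derive_unique _ _ _ Hf) as Ef.
    pose proof (is_C_derive_unique _ _ _ (Hder z Hz)) as Ef2.
    pose proof (is_C_derive_unique _ _ _ Hg) as Eg.
    pose proof (is_C_derive_unique _ _ _ (neglog1m_deriv z Hz)) as Eg2.
    assert (Ef' : f' = PS B z) by congruence.
    assert (Eg' : g' = Cinv (Cminus (RtoC 1) z)) by congruence.
    rewrite Ef', Eg'.
    assert (Hnz : Cminus (RtoC 1) z <> RtoC 0).
    { intros H0. pose proof (Re_pos_1m z Hz). rewrite H0 in H. simpl in H. lra. }
    replace (Cdiv (PS B z) (Cinv (Cminus (RtoC 1) z))) with (Cmult (Cminus (RtoC 1) z) (PS B z)) by (field; auto).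
    pose proof (Re_bound a b c d e Ha Hb Hc Hd He H1 H2 H3 H4 z Hz). unfold B in *.
    unfold inD in Hz. lra.
Qed.
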